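(* Let $A$ be a dga with a positive weight decomposition. If $H^*(A)$ is finite dimensional, then there are a rational number $\alpha>0$ and an integer $k\ge0$ such that $A$ is $(\alpha,k)$-segmented.
   Context: A weight decomposition of a non-negatively graded dga $A$ is a splitting $A^n=\bigoplus_pA^n_p$ with $dA^n_p\subseteq A^{n+1}_p$ and $A^n_pA^m_q\subseteq A^{n+m}_{p+q}$; it is positive if $A^0$ has weight $0$ and $A^i$ has positive weights for $i\ne0$. $A$ is $(\alpha,k)$-segmented if $H^n(A)_p:=H^n(A_p)$ is non-trivial only when $\alpha n\le p\le\alpha(n+k)$. *)

(* Defs.v *)
From HB Require Import structures.
From mathcomp Require Import all_boot all_order all_algebra.
Import Order.TTheory GRing.Theory Num.Theory.
Local Open Scope ring_scope.

Definition bcast {K : fieldType} {A : nat -> int -> lmodType K}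
  {n n' : nat} {p p' : int} (en : n = n') (ep : p = p') (x : A n p) : A n' p' :=
  match en in _ = n0, ep in _ = p0 return A n0 p0 with erefl, erefl => x end.

(* A non-negatively graded (unital, associative) dga over the field K together
   with a weight decomposition, presented as a bigraded object:
   wpiece n p = A^n_p, so that A^n = (+)_p A^n_p. *)
Record wdga (K : fieldType) := WDga {
  wpiece : nat -> int -> lmodType K;
  wd : forall n p, {linear wpiece n p -> wpiece n.+1 p};
  wmul : forall n m p q, wpiece n p -> wpiece m q -> wpiece (n + m)%N (p + q);
  wone : wpiece 0 0;
  wd_d : forall n p (x : wpiece n p), wd _ _ (wd _ _ x) = 0;
  wmulDl : forall n m p q (x1 x2 : wpiece n p) (y : wpiece m q),
      wmul _ _ _ _ (x1 + x2) y = wmul _ _ _ _ x1 y + wmul _ _ _ _ x2 y;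
  wmulDr : forall n m p q (x : wpiece n p) (y1 y2 : wpiece m q),
      wmul _ _ _ _ x (y1 + y2) = wmul _ _ _ _ x y1 + wmul _ _ _ _ x y2;
  wmulZl : forall n m p q (a : K) (x : wpiece n p) (y : wpiece m q),
      wmul _ _ _ _ (a *: x) y = a *: wmul _ _ _ _ x y;
  wmulZr : forall n m p q (a : K) (x : wpiece n p) (y : wpiece m q),
      wmul _ _ _ _ x (a *: y) = a *: wmul _ _ _ _ x y;
  wmulA : forall n m l p q r (x : wpiece n p) (y : wpiece m q) (z : wpiece l r),
      wmul _ _ _ _ (wmul _ _ _ _ x y) z = bcast (addnA n m l) (addrA p q r) (wmul _ _ _ _ x (wmul _ _ _ _ y z));
  wmul1l : forall n p (x : wpiece n p),
      wmul _ _ _ _ wone x = bcast (esym (add0n n)) (esym (add0r p)) x;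
  wmul1r : forall n p (x : wpiece n p),
      wmul _ _ _ _ x wone = bcast (esym (addn0 n)) (esym (addr0 p)) x;
  wleibniz : forall n m p q (x : wpiece n p) (y : wpiece m q),
      wd _ _ (wmul _ _ _ _ x y) =
        bcast (addSn n m) (erefl _) (wmul _ _ _ _ (wd _ _ x) y)
        + (-1) ^+ n *: bcast (addnS n m) (erefl _) (wmul _ _ _ _ x (wd _ _ y))
}.

Set Implicit Arguments. Unset Strict Implicit. Unset Printing Implicit Defensive.

Arguments wd {K w n p}.
Arguments wmul {K w n m p q}.
Arguments wone {K w}.
Arguments wpiece {K} w n p.

Section Defs.
Variables (K : fieldType) (A : wdga K).

Definition trivial_piece (n : nat) (p : int) : Prop :=
  forall x : wpiece A n p, x = 0.

Definition positive_weight : Prop :=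
  (forall p : int, p != 0 -> trivial_piece 0 p) /\
  (forall (n : nat) (p : int), (0 < n)%N -> p <= 0 -> trivial_piece n p).

Definition cocycle n p (x : wpiece A n p) : Prop := wd x = 0.

Definition coboundary n p : wpiece A n p -> Prop :=
  match n return wpiece A n p -> Prop with
  | 0 => fun x => x = 0
  | m.+1 => fun x => exists y : wpiece A m p, wd y = x
  end.

Definition nontrivial_cohomology (n : nat) (p : int) : Prop :=
  exists x : wpiece A n p, cocycle x /\ ~ coboundary x.

(* H^*(A) = (+)_{n,p} H^n(A_p) is finite dimensional: it is spanned by the
   classes of finitely many (bihomogeneous) cocycles. *)
Definition fin_dim_cohomology : Prop :=
  exists (S : seq (nat * int)) (g : forall n p, seq (wpiece A n p)),
    (forall n p, (n, p) \notin S -> g n p = [::]) /\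
    (forall n p i, (i < size (g n p))%N -> cocycle (g n p)`_i) /\
    (forall n p (x : wpiece A n p), cocycle x ->
       exists c : nat -> K,
         coboundary (x - \sum_(i < size (g n p)) c i *: (g n p)`_i)).

Definition segmented (alpha : rat) (k : nat) : Prop :=
  forall (n : nat) (p : int), nontrivial_cohomology n p ->
    alpha * n%:R <= p%:~R /\ p%:~R <= alpha * (n + k)%N%:R.

End Defs.

(* Main.v *)
Require Import Defs.
From mathcomp Require Import all_boot all_order all_algebra.
From mathcomp Require Import zify ring lra.
Import Order.TTheory GRing.Theory Num.Theory.
Local Open Scope ring_scope.

Lemma bound_seq (S : seq (nat * int)) : exists M : nat, (0 < M)%N /\
  forall n p, (n, p) \in S -> (n <= M)%N /\ (`|p| <= M)%N.
Proof.
elim: S => [|[a b] S [M [HM IH]]].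
  by exists 1%N; split => // n p; rewrite in_nil.
exists (M + a + `|b|)%N; split; first lia.
move=> n p; rewrite in_cons => /orP [/eqP [-> ->]|/IH [h1 h2]]; lia.
Qed.

Theorem proposition3p13 (K : fieldType) (A : wdga K) :
  positive_weight A -> fin_dim_cohomology A ->
  exists (alpha : rat) (k : nat), 0 < alpha /\ segmented A alpha k.
Proof.
move=> [H0 Hpos] [S [g [HS [Hc Hcob]]]].
have inS : forall n p, nontrivial_cohomology A n p -> (n, p) \in S.
  move=> n p [x [cx ncx]]; apply/negPn/negP => nS.
  have [c Hcc] := Hcob n p x cx.
  apply: ncx; move: Hcc; rewrite (HS n p nS) big_ord0 subr0 //.
have [M [HM HB]] := bound_seq S.
exists (M%:R^-1), (M * M)%N; split; first by rewrite invr_gt0 ltr0n.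
move=> n p Hn; have [hn hp] := HB n p (inS n p Hn).
have Mpos : (0 : rat) < M%:R by rewrite ltr0n.
have pM : p%:~R <= (M%:R : rat).
  have : (p <= M%:Z)%R by lia.
  by rewrite -(ler_int rat) => h; exact: h.
have nM : (n%:R <= (M%:R : rat)) by rewrite ler_nat.
case: n hn nM Hn => [|n] hn nM Hn.
  have p0 : p = 0.
    apply/eqP; apply/negPn/negP => /H0 Ht.
    by case: Hn => x [_ []]; rewrite (Ht x).
  rewrite p0 mulr0 /=; split => //.
  by apply: mulr_ge0; rewrite ?invr_ge0 ler0n.
have p1 : (1 <= p)%R.
  case: (lerP p 0) => // /(Hpos n.+1 p isT) Ht.
  case: Hn => x [_ []]; rewrite (Ht x) /=; exists 0; exact: linear0.
have p1' : (1 : rat) <= p%:~R by rewrite -(ler_int rat) in p1.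
split.
  apply: le_trans p1'.
  by rewrite mulrC ler_pdivrMr // mul1r.
rewrite natrD natrM mulrDr mulrA mulVf ?mul1r; last by rewrite gt_eqF.
apply: (le_trans pM); rewrite lerDr; apply: mulr_ge0; rewrite ?invr_ge0 ler0n //.
Qed.
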